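(* Let $p$ be a prime and $P$ a finite $p$-group. Assume that in the Roquette category $\mathcal{R}_p$ there is an isomorphism $$P\cong \mathbf{1}\oplus\bigoplus_{m=1}^{\infty} a_m\,\partial C_{p^m},$$ with $a_m\in\mathbb{N}$ (almost all zero), where $a_m\,\partial C_{p^m}$ denotes the direct sum of $a_m$ copies of $\partial C_{p^m}$. Then for every $m\ge 1$, $$a_m=\frac{l_m(P)-l_{m-1}(P)}{p^{m-1}(p-1)}.$$
   Context: $C_{p^m}$ is the cyclic group of order $p^m$ and $\mathbf{1}$ the trivial group. For $n\ge 1$, $l_n(P)$ is the number of conjugacy classes of elements $s\in P$ such that $s^{1+p^n}$ is conjugate to $s$ in $P$; and $l_0(P)=1$. The Roquette category $\mathcal{R}_p$ (introduced by Bouc) is an additive tensor category whose objects include all finite $p$-groups, with the following properties: every finite $p$-group $P$ has a canonical direct summand $\partial P$ in $\mathcal{R}_p$ (its edge), with $P\cong\bigoplus_{N\trianglelefteq P}\partial(P/N)$ (in particular $\partial\mathbf{1}=\mathbf{1}$ and $C_{p^m}\cong \partial C_{p^m}\oplus C_{p^{m-1}}$); and the additive functors from $\mathcal{R}_p$ to abelian groups are exactly (the extensions $\hat F$ of) the rational $p$-biset functors $F$, with $\hat F(P)=F(P)$ and $\hat F(\partial P)=\partial F(P)$, the faithful part of $F(P)$ (the intersection of the kernels of the deflation maps $F(P)\to F(P/N)$ over nontrivial normal subgroups $N$ of $P$). *)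

(* Defs.v *)
From HB Require Import structures.
From mathcomp Require Import all_boot all_order all_algebra all_fingroup all_solvable all_field all_character.
Set Implicit Arguments. Unset Strict Implicit. Unset Printing Implicit Defensive.
Import GRing.Theory Num.Theory.
Local Open Scope ring_scope.

(* A concrete model of Bouc's Roquette category R_p.                         *)
(*   Hom_{R_p^*}(H, K) = R_Q(K x H^op): the group of virtual characters of     *)
(*   Q-linear (K,H)-bimodules, i.e. of Q(K x H)-modules, (k,h).m = k m h^-1.  *)
(*   A morphism H -> K (H in gT1, K in gT2) is stored as its character        *)
(*   f : gT2 -> gT1 -> algC, f k h = value at (k,h), zero outside K x H.     *)
(*   Composition is the tensor product of bimodules over QH:                  *)
(*     (f o g)(r,t) = 1/|H| sum_{h in H} f(r,h) g(h,t).                       *)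
(*   R_p is the idempotent completion of the additive completion of this.     *)

Section Roquette.

Variables gT1 gT2 gT3 : finGroupType.

Definition rat_char (gT : finGroupType) (G : {group gT}) (phi : 'CF(G)) : Prop :=
  exists n (rG : mx_representation rat G n), phi = cfRepr (map_repr ratr rG).

Definition in_RQ (gT : finGroupType) (G : {group gT}) (phi : 'CF(G)) : Prop :=
  exists chi1 chi2, [/\ rat_char chi1, rat_char chi2 & phi = chi1 - chi2].

Definition roq_hom (H : {group gT1}) (K : {group gT2}) (f : gT2 -> gT1 -> algC) : Prop :=
  exists2 phi : 'CF(setX K H), in_RQ phi & forall k h, f k h = phi (k, h).

Definition roq_comp (K : {group gT2}) (g : gT3 -> gT2 -> algC) (f : gT2 -> gT1 -> algC)
  : gT3 -> gT1 -> algC :=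
  fun r t => (#|K|%:R)^-1 * \sum_(k in K) g r k * f k t.

End Roquette.

Section Edge.

Variable gT : finGroupType.

(* Moebius function mu(1,N) of the poset of normal subgroups of P *)
Fixpoint mob_aux (P : {set gT}) (n : nat) (N : {group gT}) : int :=
  match n with
  | 0 => 0
  | n'.+1 => if N :==: 1%g then 1 else
      - \sum_(M : {group gT} | (M <| P)%g && (M \proper N)) mob_aux P n' M
  end.

Definition mobius_normal (P : {set gT}) (N : {group gT}) : int := mob_aux P #|N| N.

(* character of the (P,P)-bimodule Q[P/N] = Inf^P_{P/N} o Def^P_{P/N} *)
Definition infdef (P N : {group gT}) : gT -> gT -> algC :=
  fun a b => if (a \in P) && (b \in P) then
     (#|[set C in rcosets N P | ((a *: C) :* b^-1)%g == C]|)%:R else 0.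

Definition roq_id (P : {group gT}) : gT -> gT -> algC := infdef P 1%G.

(* the edge idempotent e_P = sum_{N normal in P} mu(1,N) Inf^P_{P/N} Def^P_{P/N};
   the edge dP is the object (P, e_P) of R_p *)
Definition edge_idem (P : {group gT}) : gT -> gT -> algC :=
  fun a b => \sum_(N : {group gT} | (N <| P)%g) (mobius_normal P N)%:~R * infdef P N a b.

End Edge.

(* P is isomorphic in R_p to the direct sum of the edges dG_i of the groups
   G_i (i < n): there are morphisms f_i in e_{G_i} Hom(P, G_i) and
   g_i in Hom(G_i, P) e_{G_i} with sum_i g_i o f_i = id_P and
   f_i o g_j = delta_{ij} e_{G_i}. *)
Definition roq_iso_edges (gT cT : finGroupType) (P : {group gT}) (n : nat)
    (G : 'I_n -> {group cT}) : Prop :=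
  exists (f : 'I_n -> cT -> gT -> algC) (g : 'I_n -> gT -> cT -> algC),
  [/\ forall i, roq_hom P (G i) (f i) /\ roq_hom (G i) P (g i),
      forall i, roq_comp (G i) (edge_idem (G i)) (f i) =2 f i
                /\ roq_comp P (f i) (roq_id P) =2 f i,
      forall i, roq_comp (G i) (g i) (edge_idem (G i)) =2 g i
                /\ roq_comp P (roq_id P) (g i) =2 g i,
      (fun a b => \sum_(i < n) roq_comp (G i) (g i) (f i) a b) =2 roq_id P
    & forall i j, roq_comp P (f i) (g j) =2
                  (if i == j then edge_idem (G i) else fun _ _ => 0)].

Definition lnum (p : nat) (gT : finGroupType) (P : {group gT}) (n : nat) : nat :=
  if n == 0%N then 1%N else
  #|[set C in classes P | [exists s in C, (s ^+ (1 + p ^ n)%N)%g \in C]]|.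

(* Main.v *)
Require Import Defs.
From HB Require Import structures.
From mathcomp Require Import all_boot all_order all_algebra all_fingroup all_solvable all_field all_character.
From mathcomp Require Import zify.
Import GRing.Theory Num.Theory.
Local Open Scope ring_scope.

Set Implicit Arguments. Unset Strict Implicit. Unset Printing Implicit Defensive.


Lemma conj_diag_exp (n : nat) (B : 'M[algC]_n.+1) (e : 'rV_n.+1) k :
  B \in unitmx ->
  (invmx B *m diag_mx e *m B) ^+ k = invmx B *m diag_mx (\row_i e 0 i ^+ k) *m B.
Proof.
move=> uB; elim: k => [|k IH].
  rewrite expr0.
  have -> : diag_mx (\row_i e 0 i ^+ 0) = 1%:M :> 'M_n.+1.
    by apply/matrixP=> i j; rewrite !mxE; case: (i == j); rewrite ?mxE ?expr0.
  by rewrite mulmx1 mulVmx.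
rewrite exprS IH.
rewrite -mulmxE !mulmxA.
have -> : invmx B *m diag_mx e *m B *m invmx B = invmx B *m diag_mx e.
  by rewrite -mulmxA mulmxV // mulmx1.
rewrite -(mulmxA (invmx B)) mulmx_diag; congr (_ *m diag_mx _ *m _).
by apply/rowP=> j; rewrite !mxE exprS.
Qed.

Lemma rat_char_expg (gT : finGroupType) (G : {group gT}) (phi : 'CF(G)) x k :
  rat_char phi -> x \in G -> coprime k #[x]%g -> phi (x ^+ k)%g = phi x.
Proof.
case=> n [rG ->] Gx cok.
have Gxk : (x ^+ k)%g \in G by rewrite groupX.
case: n rG => [|n] rG.
  by rewrite !cfunE Gx Gxk /= /mxtrace !big_ord0.
set rC := map_repr ratr rG.
have [e [[B uB Dx] [e1 _] [cx _] _]] := repr_rsim_diag rC Gx.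
have [u Du] := Qn_aut_exists cok.
have chir : cfRepr rC x = ratr (\tr (rG x)).
  by rewrite cfunE Gx mulr1n map_reprE trace_map_mx.
rewrite chir -(fmorph_rat u) -chir cx rmorph_sum /=.
rewrite cfunE Gxk mulr1n repr_mxX // Dx conj_diag_exp //.
rewrite mxtrace_mulC mulmxA mulmxV // mul1mx mxtrace_diag.
by apply: eq_bigr => i _; rewrite mxE (Du _ (e1 i)).
Qed.


Lemma in_RQ_expg (gT : finGroupType) (G : {group gT}) (phi : 'CF(G)) x k :
  in_RQ phi -> x \in G -> coprime k #[x]%g -> phi (x ^+ k)%g = phi x.
Proof.
case=> c1 [c2 [r1 r2 ->]] Gx co.
by rewrite !cfunE (rat_char_expg r1 Gx co) (rat_char_expg r2 Gx co).
Qed.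

Lemma pair_expg (A B : finGroupType) (a : A) (b : B) n :
  ((a, b) ^+ n = (a ^+ n, b ^+ n))%g.
Proof. by elim: n => // n IH; rewrite !expgS IH. Qed.

Lemma coprime_pnat p n d : prime p -> (0 < n)%N -> p.-nat d -> coprime (1 + p ^ n) d.
Proof.
move=> pp n0 pd; apply: (p'nat_coprime (pi := p)) => //.
rewrite p'natE // dvdn_addl ?dvdn_exp // dvdn1.
by rewrite neq_ltn prime_gt1 ?orbT.
Qed.

Lemma sum_expg (gT : finGroupType) (H : {group gT}) a (F : gT -> algC) :
  coprime #|H| a -> \sum_(y in H) F (y ^+ a)%g = \sum_(y in H) F y.
Proof.
move=> co.
have inj : {in H &, injective (fun y => y ^+ a)%g} := can_in_inj (expgK co).
have im : [set (y ^+ a)%g | y in H] = H.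
  apply/eqP; rewrite eqEcard card_in_imset // leqnn andbT.
  by apply/subsetP=> z /imsetP[y Hy ->]; apply: groupX.
by rewrite -[in RHS]im big_imset.
Qed.

Definition tw (T : finGroupType) (a : nat) (H : {group T}) (F : T -> T -> algC) :=
  (#|H|%:R)^-1 * \sum_(x in H) F (x ^+ a)%g x.

Lemma tw_transfer (gT cT : finGroupType) (P : {group gT}) (K : {group cT}) a
    (f : cT -> gT -> algC) (g : gT -> cT -> algC) :
  roq_hom P K f -> coprime #|P| a ->
  (forall k y, k \in K -> y \in P -> coprime a #[(k, y)]%g) ->
  tw a P (roq_comp K g f) = tw a K (roq_comp P f g).
Proof.
case=> phi Rphi Dphi coP co.
rewrite /tw /roq_comp.
transitivity ((#|P|%:R)^-1 * ((#|K|%:R)^-1 * \sum_(k in K) \sum_(y in P)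
   f (k ^+ a)%g (y ^+ a)%g * g (y ^+ a)%g k)).
  congr (_ * _); rewrite -mulr_sumr exchange_big /=; congr (_ * _).
  apply: eq_bigr => k Kk; apply: eq_bigr => y Py; rewrite mulrC; congr (_ * _).
  rewrite !Dphi -pair_expg (in_RQ_expg Rphi) ?co //.
  by rewrite in_setX Kk Py.
rewrite mulrA [(_^-1 * _^-1)]mulrC -mulrA; congr (_ * _).
rewrite mulr_sumr; apply: eq_bigr => k Kk; congr (_ * _).
by rewrite (sum_expg (fun z => f (k ^+ a)%g z * g z k) coP).
Qed.


Section ClassCount.
Variable gT : finGroupType.
Implicit Types P : {group gT}.

Lemma conj_cent1 (y w : gT) : ((y ^ w)%g == y) = (w \in 'C[y]%g).
Proof. by rewrite [w \in _]inE conjg_set1 sub1set inE. Qed.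

Lemma classX_inv P a (y u : gT) : u \in P ->
  (((y ^ u) ^+ a)%g \in ((y ^ u) ^: P)%g) = ((y ^+ a)%g \in (y ^: P)%g).
Proof.
move=> Pu; rewrite -conjXg classGidl //.
by rewrite class_sym classGidl // class_sym.
Qed.

Lemma card_fixset P a (y : gT) : y \in P ->
  #|[set z in P | (((y ^+ a) ^ z)%g == y)]| =
  if ((y ^+ a)%g \in (y ^: P)%g) then #|'C_P[y]%g| else 0%N.
Proof.
move=> Py; case: ifP => [/imsetP[t Pt Dt] | nfix].
  have -> : [set z in P | (((y ^+ a) ^ z)%g == y)] = (t^-1 *: 'C_P[y])%g.
    apply/setP=> z; rewrite inE mem_lcoset invgK in_setI Dt -conjgM conj_cent1.
    by rewrite (groupMl _ Pt).
  exact: card_lcoset.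
apply/eqP; rewrite cards_eq0; apply/eqP/setP=> z; rewrite !inE.
apply/negbTE/negP=> /andP[Pz /eqP Dy]; move/negP: nfix; apply.
by rewrite class_sym -{1}Dy memJ_class.
Qed.

Lemma sum_cent_class P (x : gT) : x \in P ->
  (\sum_(y in (x ^: P)%g) #|'C_P[y]%g|)%N = #|P|.
Proof.
move=> Px.
have key y : y \in (x ^: P)%g -> (#|'C_P[y]%g| * #|(x ^: P)%g|)%N = #|P|.
  move=> /class_eqP <-; rewrite -index_cent1 Lagrange //; exact: subsetIl.
have dv : (#|(x ^: P)%g| %| #|P|)%N by rewrite -(key x (class_refl _ _)) dvdn_mull.
rewrite (eq_bigr (fun _ => #|P| %/ #|(x ^: P)%g|)%N); last first.
  by move=> y /key <-; rewrite mulnK // card_gt0; apply/set0Pn; exists x; apply: class_refl.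
by rewrite sum_nat_const mulnC divnK.
Qed.

Lemma sum_fixset P a :
  (\sum_(y in P) #|[set z in P | (((y ^+ a) ^ z)%g == y)]|)%N =
  (#|P| * #|[set C in classes P | [exists s in C, (s ^+ a)%g \in C]]|)%N.
Proof.
have /and3P[/eqP cov triv _] := classes_partition P.
rewrite -{1}cov big_trivIset //= mulnC -sum_nat_const.
rewrite (eq_bigl (fun C => (C \in classes P) && [exists s in C, (s ^+ a)%g \in C]));
  last by move=> C; rewrite inE.
rewrite big_mkcondr /=; apply: eq_bigr => _ /imsetP[x Px ->].
have Qx : [exists s in (x ^: P)%g, (s ^+ a)%g \in (x ^: P)%g] = ((x ^+ a)%g \in (x ^: P)%g).
  apply/existsP/idP => [[s /andP[/imsetP[u Pu ->]]] | xfix].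
    by rewrite -(@classX_inv P a x u Pu) classGidl.
  by exists x; rewrite class_refl.
rewrite Qx.
transitivity (\sum_(y in (x ^: P)%g) (if (x ^+ a)%g \in (x ^: P)%g then #|'C_P[y]%g| else 0%N))%N.
  apply: eq_bigr => _ /imsetP[u Pu ->].
  by rewrite card_fixset ?groupJ ?classX_inv ?classGidl.
case: ifP => _; first exact: sum_cent_class.
by rewrite big1.
Qed.
Lemma coset1_set (w z y : gT) :
  (rcoset 1 z = [set z] /\ ((w *: [set z] :* y^-1 == [set z]) = (w ^ z == y)))%g.
Proof.
split.
  by rewrite rcosetE; apply/setP=> u; rewrite mem_rcoset !inE -eq_mulgV1.
rewrite !mulg_set1 (inj_eq set1_inj) conjgE.
apply/eqP/eqP => [H | <-]; last by rewrite !invMg invgK !mulgA mulgK mulgV mul1g.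
by rewrite -[(w * z)%g](mulgKV y) H mulKg.
Qed.

Lemma tw_roq_id P a :
  tw a P (roq_id P) = #|[set C in classes P | [exists s in C, (s ^+ a)%g \in C]]|%:R.
Proof.
rewrite /tw (eq_bigr (fun y => (#|[set z in P | (((y ^+ a) ^ z)%g == y)]|)%:R)).
  by rewrite -natr_sum sum_fixset natrM mulKf // pnatr_eq0 -lt0n cardG_gt0.
move=> y Py; rewrite /roq_id /infdef groupX // Py /=; congr (_%:R).
have -> : [set C in rcosets 1%G P | ((y ^+ a) *: C :* y^-1 == C)%g] =
          [set [set z] | z in [set z in P | (((y ^+ a) ^ z)%g == y)]].
  apply/setP => C; rewrite inE; apply/andP/imsetP => [[/imsetP[z Pz ->] cond] | [z zin ->]].
    exists z; last by rewrite (coset1_set (y ^+ a)%g z y).1.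
    by rewrite inE Pz /= -(coset1_set (y ^+ a)%g z y).2 -(coset1_set (y ^+ a)%g z y).1.
  move: zin; rewrite inE => /andP[Pz cond]; split.
    by apply/imsetP; exists z => //; rewrite (coset1_set (y ^+ a)%g z y).1.
  by rewrite (coset1_set (y ^+ a)%g z y).2.
by rewrite card_imset //; apply: set1_inj.
Qed.
End ClassCount.


Section Abel.
Variable gT : finGroupType.
Section Inner.
Variables G N : {group gT}.
Hypotheses (cGG : abelian G) (sNG : N \subset G).

Lemma abel_comm u v : u \in G -> v \in G -> commute u v.
Proof. by move=> Gu Gv; apply: (centsP cGG) . Qed.

Lemma coset_cond (w x g : gT) : w \in G -> x \in G -> g \in G ->
  ((w *: (N :* g) :* x^-1 == N :* g) = (w * x^-1 \in N))%g.
Proof.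
move=> Gw Gx Gg.
have sw : forall u, u \in G -> (w^-1 * (u * x) * g^-1 = (w * x^-1)^-1 * (u * g^-1))%g.
  move=> u Gu; rewrite invMg invgK !mulgA; congr (_ * _)%g.
  by rewrite -[RHS]mulgA; apply/esym/abel_comm; rewrite ?groupM ?groupV.
apply/eqP/idP => [E | Nwx].
  have : (w * g * x^-1 \in N :* g)%g.
    by rewrite -E mem_rcoset invgK mulgKV mem_lcoset mulKg mem_rcoset mulgV group1.
  have cg : commute g x^-1 by apply: abel_comm; rewrite ?groupV.
  by rewrite mem_rcoset -(mulgA w) cg mulgA mulgK.
apply/setP=> u; rewrite mem_rcoset mem_lcoset !mem_rcoset invgK.
have [Gu | nGu] := boolP (u \in G).
  by rewrite sw // groupMl ?groupV.
have f1 : ((u * g^-1)%g \in N) = false.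
  by apply/negbTE; apply: contra nGu => /(subsetP sNG); rewrite groupMr ?groupV.
have f2 : ((w^-1 * (u * x) * g^-1)%g \in N) = false.
  apply/negbTE; apply: contra nGu => /(subsetP sNG).
  by rewrite groupMr ?groupV // groupMl ?groupV // groupMr.
by rewrite f1 f2.
Qed.

End Inner.

Lemma card_cond_const (T : finType) (A : {set T}) (b : bool) :
  #|[set C in A | b]| = (b * #|A|)%N.
Proof.
case: b; last by rewrite mul0n; apply: eq_card0 => C; rewrite inE andbF.
by rewrite mul1n; apply: eq_card => C; rewrite inE andbT.
Qed.

Lemma sum_cond_const (T : finType) (A : {set T}) (b : T -> bool) c :
  (\sum_(x in A) (b x * c))%N = (#|[set x in A | b x]| * c)%N.
Proof.
rewrite -sum_nat_const big_mkcond /= [RHS]big_mkcond /=.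
by apply: eq_bigr => x _; rewrite inE; case: (x \in A); case: (b x); rewrite ?mul1n ?mul0n.
Qed.

Lemma tw_infdef (G N : {group gT}) m :
  abelian G -> N \subset G ->
  tw (1 + m) G (infdef G N) = #|[set x in G | (x ^+ m)%g \in N]|%:R / #|N|%:R.
Proof.
move=> cGG sNG; rewrite /tw.
have E x : x \in G -> infdef G N (x ^+ (1 + m))%g x = ((x ^+ m \in N)%g * #|G : N|%g)%:R.
  move=> Gx; rewrite /infdef groupX // Gx /=; congr (_%:R).
  rewrite -card_cond_const; apply: eq_card => C; rewrite !inE.
  apply: andb_id2l => /rcosetsP[g Gg ->].
  by rewrite (coset_cond cGG sNG (groupX _ Gx) Gx Gg) add1n expgSr mulgK.
rewrite (eq_bigr _ E) -natr_sum sum_cond_const -(Lagrange sNG) !natrM invfM.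
rewrite [X in _ * X]mulrC mulrA divfK; first by rewrite mulrC.
by rewrite pnatr_eq0 -lt0n indexg_gt0.
Qed.
End Abel.


Lemma sum_pick (R : zmodType) (T : finType) (P : pred T) (F : T -> R) x0 :
  P x0 -> (forall x, P x -> x != x0 -> F x = 0) -> \sum_(x | P x) F x = F x0.
Proof.
by move=> Px0 H; rewrite (bigD1 x0) //= big1 ?addr0 // => x /andP[Px nx]; apply: H.
Qed.

Lemma mob_fuel (cT : finGroupType) (P : {set cT}) n m (N : {group cT}) :
  (#|N| <= n)%N -> (#|N| <= m)%N -> mob_aux P n N = mob_aux P m N.
Proof.
elim: n m N => [|n IH] m N; first by rewrite leqNgt cardG_gt0.
case: m => [|m]; first by move=> _; rewrite leqNgt cardG_gt0.
move=> leN leM /=; case: (N :==: 1%g) => //; congr (- _).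
apply: eq_bigr => M /andP[_ prM]; have ltM := proper_card prM.
by apply: IH; rewrite -ltnS (leq_trans ltM).
Qed.

Section Cyc.
Variables (p : nat) (cT : finGroupType) (G : {group cT}) (k : nat).
Hypotheses (pp : prime p) (cycG : cyclic G) (oG : #|G| = (p ^ k)%N).

Lemma pG : (p.-group G)%g.
Proof. by rewrite /pgroup oG pnatX pnat_id. Qed.

Lemma card_Ldiv j : #|[set x in G | (x ^+ (p ^ j))%g == 1%g]| = (p ^ minn j k)%N.
Proof.
have [g defG] := cyclicP cycG.
have og : #[g]%g = (p ^ k)%N by rewrite orderE -defG.
have -> : [set x in G | (x ^+ (p ^ j))%g == 1%g] = 'Ohm_j(G)%g.
  rewrite (OhmEabelian pG); last by apply: abelianS (Ohm_sub j G) (cyclic_abelian cycG).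
  by apply/setP => x; rewrite !inE.
have pg : (p.-elt g)%g by apply: (mem_p_elt pG); rewrite defG cycle_id.
have -> : G = <[g]>%G by apply: val_inj.
rewrite (Ohm_p_cycle j pg) -orderE orderXgcd og pfactorK //.
rewrite (gcdn_idPr _) ?dvdn_exp2l ?leq_subr // -expnB ?prime_gt0 ?leq_subr //.
by rewrite -minnE minnC.
Qed.

Lemma memZ (Z : {group cT}) y : Z \subset G -> #|Z| = p -> y \in G ->
  (y \in Z) = ((y ^+ p)%g == 1%g).
Proof.
move=> sZG oZ Gy; apply/idP/idP => [Zy | ]; first by rewrite -oZ expg_cardG.
rewrite -order_dvdn; have [_ dvP] := primeP pp.
move=> /dvP /orP[]; first by rewrite order_eq1 => /eqP->; rewrite group1.
move=> /eqP oy; have : (<[y]>%g :==: Z) by rewrite (eq_subG_cyclic cycG) ?cycle_subG // -orderE oy oZ.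
by move/eqP <-; rewrite cycle_id.
Qed.

Lemma cycG_nt1 : (0 < k)%N -> exists2 Z : {group cT}, Z \subset G & #|Z| = p.
Proof.
move=> k0; have [g defG] := cyclicP cycG.
have og : #[g]%g = (p ^ k)%N by rewrite orderE -defG.
have dv : (p %| #[g]%g)%N by rewrite og dvdn_exp.
have := cycle_sub_group dv; set Z0 := (<[_]>)%G => ES.
have : Z0 \in [set H : {group cT} | H \subset <[g]>%g & #|H| == p] by rewrite ES set11.
by rewrite inE -defG => /andP[sZ /eqP oZ]; exists Z0.
Qed.

Lemma uniqZ (Z1 Z2 : {group cT}) : Z1 \subset G -> Z2 \subset G -> #|Z1| = #|Z2| -> Z1 = Z2.
Proof.
by move=> s1 s2 o12; apply: val_inj; apply/eqP; rewrite /= (eq_subG_cyclic cycG) // o12.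
Qed.

Lemma sub_nt_p (N : {group cT}) : N \subset G -> N :!=: 1%g -> (p %| #|N|)%N.
Proof.
move=> sNG nN1; have pN := pgroupS sNG pG.
rewrite (card_pgroup pN); case e : (logn p #|N|) => [|j]; last by rewrite dvdn_exp.
move: nN1; rewrite -cardG_gt1 (card_pgroup pN) e.
by [].
Qed.

Lemma mob_cyclic (N : {group cT}) : N \subset G ->
  mobius_normal G N = ((N :==: 1%g)%:R - (#|N| == p)%:R : int).
Proof.
move: {2}#|N| (leqnn #|N|) => n; elim: n N => [|n IH] N leN sNG.
  by move: leN; rewrite leqNgt cardG_gt0.
have p1 : (1 == p) = false by case: eqP pp => // <-.
rewrite /mobius_normal; have [N1 | nN1] := boolP (N :==: 1%g).
  by rewrite (eqP N1) cards1 /= N1 p1 subr0.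
have Ef : mob_aux G #|N| N = mob_aux G (#|N|.-1).+1 N by apply: mob_fuel; rewrite ?prednK ?cardG_gt0.
rewrite Ef /= (negbTE nN1).
rewrite (eq_bigr (fun M : {group cT} => ((M :==: 1%g)%:R - (#|M| == p)%:R : int))); last first.
  move=> M /andP[nMG prM]; have ltM := proper_card prM.
  have -> : mob_aux G #|N|.-1 M = mobius_normal G M.
    by apply: mob_fuel => //; rewrite -ltnS prednK ?cardG_gt0.
  apply: IH; first by rewrite -ltnS (leq_trans ltM).
  exact: subset_trans (proper_sub prM) sNG.
rewrite sumrB.
have -> : \sum_(M : {group cT} | (M <| G)%g && (M \proper N)) ((M :==: 1%g)%:R : int) = 1.
  rewrite (@sum_pick _ _ _ _ 1%G) ?normal1 ?proper1G ?eqxx //=.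
  move=> M _ nM1; case: eqP => // M1; case/eqP: nM1; exact: val_inj.
have [Np | Nnp] := eqVneq #|N| p.
  rewrite big1 ?subr0 ?Np ?eqxx ?sub0r // => M /andP[_ prM].
  by have := proper_card prM; rewrite Np => /ltn_eqF->.
have dvN := sub_nt_p sNG nN1.
have cycN : cyclic N := cyclicS sNG cycG.
have [b defN] := cyclicP cycN.
have dvb : (p %| #[b]%g)%N by rewrite orderE -defN.
have ES := cycle_sub_group dvb; set Z0 := (<[_]>)%G in ES.
have : Z0 \in [set H : {group cT} | H \subset <[b]>%g & #|H| == p] by rewrite ES set11.
rewrite inE -defN => /andP[sZN /eqP oZ].
rewrite (@sum_pick _ _ _ _ Z0).
- by rewrite oZ eqxx subrr oppr0 subr0.
- apply/andP; split; first by rewrite -sub_abelian_normal ?cyclic_abelian // (subset_trans sZN).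
  by rewrite properEcard sZN oZ ltn_neqAle eq_sym Nnp dvdn_leq.
move=> M /andP[_ prM] nMZ; case: eqP => // oM; case/eqP: nMZ.
apply: (uniqZ (subset_trans (proper_sub prM) sNG) (subset_trans sZN sNG)).
by rewrite oM oZ.
Qed.

Lemma tw_edge n : tw (1 + p ^ n) G (edge_idem G) =
  (p ^ minn n k)%:R - (if (0 < k)%N then (p ^ minn n.+1 k)%:R / p%:R else 0).
Proof.
have cGG := cyclic_abelian cycG.
transitivity (\sum_(N : {group cT} | (N <| G)%g)
   (mobius_normal G N)%:~R * tw (1 + p ^ n) G (infdef G N)).
  rewrite /tw /edge_idem exchange_big /= mulr_sumr; apply: eq_bigr => N _.
  by rewrite -mulr_sumr mulrCA.
rewrite (eq_bigr (fun N : {group cT} => (((N :==: 1%g)%:R - (#|N| == p)%:R : int)%:~R *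
   (#|[set x in G | (x ^+ (p ^ n))%g \in N]|%:R / #|N|%:R)))); last first.
  by move=> N nNG; rewrite mob_cyclic ?normal_sub // tw_infdef ?normal_sub.
under eq_bigr do rewrite rmorphB /= !rmorph_nat mulrBl.
rewrite sumrB; congr (_ - _).
  rewrite (@sum_pick _ _ _ _ 1%G) ?normal1 //=; last first.
    move=> M _ nM1; case: eqP; last by rewrite mul0r.
    by move=> M1; case/eqP: nM1; apply: val_inj.
  rewrite eqxx mul1r cards1 divr1 -(card_Ldiv n); congr (_%:R); apply: eq_card => x.
  by rewrite !inE.
case: (posnP k) => [k0 | kpos].
  rewrite big1 // => N /normal_sub sNG.
  have : (#|N| <= 1)%N by rewrite -(expn0 p) -k0 -oG subset_leq_card.
  by case: eqP => [-> | _]; [rewrite leqNgt prime_gt1 | rewrite mul0r].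
have [Z sZG oZ] := cycG_nt1 kpos.
rewrite (@sum_pick _ _ _ _ Z) /=.
- rewrite oZ eqxx mul1r -(card_Ldiv n.+1); congr (_%:R / _); apply: eq_card => x.
  rewrite !inE; case Gx : (x \in G) => //=.
  by rewrite (memZ sZG oZ) ?groupX // -expgM expnSr.
- by rewrite -sub_abelian_normal.
move=> M /normal_sub sMG nMZ; case: eqP; last by rewrite mul0r.
by move=> oM; case/eqP: nMZ; apply: uniqZ => //; rewrite oM oZ.
Qed.

End Cyc.


Definition Wn (p n k : nat) : nat :=
  if k == 0%N then 1%N else if (k <= n)%N then (p ^ k - p ^ k.-1)%N else 0%N.

Lemma V_W p n x : prime p ->
  (p ^ minn n x)%:R - (if (0 < x)%N then (p ^ minn n.+1 x)%:R / p%:R else 0)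
    = (Wn p n x)%:R :> algC.
Proof.
move=> pp; have p0 : p%:R != 0 :> algC by rewrite pnatr_eq0 -lt0n prime_gt0.
rewrite /Wn; case: x => [|x] /=; first by rewrite minn0 subr0.
have pdiv j : (p ^ j.+1)%:R / p%:R = (p ^ j)%:R :> algC by rewrite expnSr natrM mulfK.
case: leqP => [le | lt].
  have -> : minn n x.+1 = n by apply/minn_idPl; apply: leqW.
  have -> : minn n.+1 x.+1 = n.+1 by apply/minn_idPl.
  by rewrite pdiv subrr.
have -> : minn n x.+1 = x.+1 by apply/minn_idPr.
have -> : minn n.+1 x.+1 = x.+1 by apply/minn_idPr; apply: leqW.
rewrite pdiv natrB //.
by rewrite leq_exp2l ?prime_gt1.
Qed.

Lemma sum_Wn0 p (s : seq nat) : (\sum_(x <- s) Wn p 0 x)%N = count_mem 0%N s.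
Proof.
elim: s => [|x s IH]; first by rewrite big_nil.
by rewrite big_cons IH /= /Wn; case: x.
Qed.

Lemma Wn_step p m x : (0 < m)%N ->
  Wn p m x = (Wn p m.-1 x + (x == m) * (p ^ m - p ^ m.-1))%N.
Proof.
move=> m0; rewrite /Wn; case: x => [|x] /=; first by case: m m0.
case: (ltngtP x.+1 m) => [lt | gt | <-].
- have e : (x.+1 == m) = false by apply/eqP; lia.
  by rewrite ifT ?ifT ?e ?muln0 ?addn0 //; lia.
- have e : (x.+1 == m) = false by apply/eqP; lia.
  by rewrite ifF ?ifF ?e ?muln0 ?addn0 //; apply/negbTE; rewrite -leqNgt; lia.
- by rewrite /= ltnn mul1n add0n.
Qed.

Lemma sum_Wn_step p m (s : seq nat) : (0 < m)%N ->
  (\sum_(x <- s) Wn p m x)%N =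
  (\sum_(x <- s) Wn p m.-1 x + count_mem m s * (p ^ m - p ^ m.-1))%N.
Proof.
move=> m0; elim: s => [|x s IH]; first by rewrite !big_nil.
rewrite !big_cons IH (Wn_step _ _ m0) /= mulnDl eq_sym.
by rewrite -!addnA; congr (_ + _); rewrite addnCA.
Qed.

Lemma tw_ext (T : finGroupType) a (H : {group T}) (F F' : T -> T -> algC) :
  F =2 F' -> tw a H F = tw a H F'.
Proof. by move=> E; rewrite /tw; congr (_ * _); apply: eq_bigr => x _; rewrite E. Qed.

Lemma tw_sum (T : finGroupType) a (H : {group T}) n (F : 'I_n -> T -> T -> algC) :
  tw a H (fun x y => \sum_(i < n) F i x y) = \sum_(i < n) tw a H (F i).
Proof. by rewrite /tw exchange_big mulr_sumr. Qed.

Unset Implicit Arguments. Set Strict Implicit.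

Theorem theorem3p2 (p : nat) (gT : finGroupType) (P : {group gT})
    (cT : finGroupType) (c : nat -> {group cT}) (s : seq nat) :
  prime p -> (p.-group P)%g ->
  (forall m, m \in s -> cyclic (c m) /\ #|c m| = (p ^ m)%N) ->
  count_mem 0%N s = 1%N ->
  roq_iso_edges P (fun i : 'I_(size s) => c (nth 0%N s i)) ->
  forall m, (0 < m)%N ->
    (count_mem m s)%:R =
      ((lnum p P m)%:R - (lnum p P m.-1)%:R) / (p ^ m.-1 * (p - 1))%:R :> rat.
Proof.
move=> pp pP hc c0 [f [g [h1 _ _ h4 h5]]] m m0.
have hcs (i : 'I_(size s)) : cyclic (c (nth 0%N s i)) /\ #|c (nth 0%N s i)| = (p ^ nth 0%N s i)%N.
  by apply: hc; apply: mem_nth.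
have key n : lnum p P n = (\sum_(x <- s) Wn p n x)%N.
  case: (posnP n) => [-> | n0]; first by rewrite sum_Wn0 c0.
  apply/eqP; rewrite -(eqr_nat algC) natr_sum; apply/eqP.
  have coP : coprime #|P| (1 + p ^ n) by rewrite coprime_sym coprime_pnat.
  have -> : (lnum p P n)%:R = tw (1 + p ^ n) P (roq_id P).
    by rewrite tw_roq_id /lnum (negbTE (lt0n_neq0 n0)).
  rewrite -(tw_ext _ _ h4) tw_sum (big_nth 0%N) big_mkord.
  apply: eq_bigr => i _.
  have [cyc oc] := hcs i.
  rewrite (tw_transfer _ (h1 i).1 coP); last first.
    move=> k y Kk Py; apply: coprime_pnat => //.
    apply: (@pnat_dvd _ #|setX_group (c (nth 0%N s i)) P|); first by apply: order_dvdG; rewrite in_setX Kk Py.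
    by rewrite cardsX pnatM oc pnatX pnat_id //=.
  have := (h5 i i); rewrite eqxx => /tw_ext ->.
  by rewrite (tw_edge pp cyc oc) V_W.
have D : (p ^ m - p ^ m.-1 = p ^ m.-1 * (p - 1))%N.
  by rewrite -{1}(prednK m0) expnSr mulnBr muln1.
have Dpos : (0 < p ^ m.-1 * (p - 1))%N by rewrite muln_gt0 expn_gt0 prime_gt0 // subn_gt0 prime_gt1.
rewrite !key (sum_Wn_step _ _ m0) -key D natrD addrAC subrr add0r natrM mulfK //.
by rewrite pnatr_eq0 -lt0n.
Qed.
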